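(* Let $S$ be an inverse semigroup that is a mirror semigroup, with semilattice of idempotents $\Sigma=\Sigma(S)$. Then $(S,\leqslant)$ is conditionally directed-complete if and only if $(\Sigma,\leqslant)$ is conditionally directed-complete.
   Context: An inverse semigroup is a semigroup $S$ in which every $s$ has a unique $s^*$ with $ss^*s=s$ and $s^*ss^*=s^*$. $\Sigma(S)$ is the set of idempotents of $S$. The intrinsic order is $s\leqslant t$ iff $s=t\epsilon$ for some idempotent $\epsilon$. A subset of a poset is directed if it is nonempty and any two elements have an upper bound in it. A poset is conditionally directed-complete if every directed subset that is bounded above has a supremum. $S$ is a mirror semigroup if every directed subset of $\Sigma$ having a supremum in $(\Sigma,\leqslant)$ also has a supremum in $(S,\leqslant)$. *)

(* Defs.v *)
Definition is_inverse_semigroup {S : Type} (mul : S -> S -> S) : Prop :=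
  (forall a b c, mul a (mul b c) = mul (mul a b) c) /\
  (forall s, exists! t, mul (mul s t) s = s /\ mul (mul t s) t = t).

Definition idem {S : Type} (mul : S -> S -> S) (e : S) : Prop := mul e e = e.

Definition nat_le {S : Type} (mul : S -> S -> S) (s t : S) : Prop :=
  exists e, idem mul e /\ s = mul t e.

(** Poset notions for the poset {x | P x} ordered by the restriction of le. *)
Definition directed {S : Type} (le : S -> S -> Prop) (D : S -> Prop) : Prop :=
  (exists x, D x) /\
  (forall x y, D x -> D y -> exists z, D z /\ le x z /\ le y z).

Definition is_ub {S : Type} (P : S -> Prop) (le : S -> S -> Prop)
  (D : S -> Prop) (u : S) : Prop :=
  P u /\ forall x, D x -> le x u.

Definition is_sup {S : Type} (P : S -> Prop) (le : S -> S -> Prop)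
  (D : S -> Prop) (u : S) : Prop :=
  is_ub P le D u /\ forall v, is_ub P le D v -> le u v.

Definition cond_directed_complete {S : Type} (P : S -> Prop)
  (le : S -> S -> Prop) : Prop :=
  forall D : S -> Prop, (forall x, D x -> P x) -> directed le D ->
    (exists u, is_ub P le D u) -> exists u, is_sup P le D u.

Definition allS {S : Type} (_ : S) : Prop := True.

Definition mirror {S : Type} (mul : S -> S -> S) : Prop :=
  forall D : S -> Prop, (forall x, D x -> idem mul x) -> directed (nat_le mul) D ->
    (exists u, is_sup (idem mul) (nat_le mul) D u) ->
    exists u, is_sup allS (nat_le mul) D u.

(* Main.v *)
Require Import Defs.
From Stdlib Require Import ClassicalEpsilon.

Definition isg {S : Type} (m : S -> S -> S) (i : S -> S) : Prop :=
  (forall a b c, m a (m b c) = m (m a b) c) /\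
  (forall s, m (m s (i s)) s = s) /\
  (forall s, m (m (i s) s) (i s) = i s) /\
  (forall s t, m (m s t) s = s -> m (m t s) t = t -> t = i s).

Lemma get_inv {S : Type} (m : S -> S -> S) :
  is_inverse_semigroup m -> exists i, isg m i.
Proof.
  intros [A H].
  exists (fun s => proj1_sig (constructive_indefinite_description _ (H s))).
  split; [exact A|].
  split; [|split]; intros s.
  - destruct (constructive_indefinite_description _ (H s)) as [t [[h1 h2] hu]]; exact h1.
  - destruct (constructive_indefinite_description _ (H s)) as [t [[h1 h2] hu]]; exact h2.
  - intros t h1 h2.
    destruct (constructive_indefinite_description _ (H s)) as [t' [[h1' h2'] hu]]; simpl.
    rewrite <- (hu t (conj h1 h2)). apply hu; auto.
Qed.

Lemma ii {S} (m : S -> S -> S) i : isg m i -> forall s, i (i s) = s.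
Proof. intros (A & I1 & I2 & U) s. symmetry. apply U; auto. Qed.

Lemma inv_idem {S} (m : S -> S -> S) i : isg m i -> forall e, idem m e -> i e = e.
Proof. intros (A & I1 & I2 & U) e He. unfold idem in He. symmetry; apply U; rewrite !He; auto. Qed.

Lemma idem_mul {S} (m : S -> S -> S) i : isg m i -> forall e f, idem m e -> idem m f ->
  idem m (m e f).
Proof.
  intros H e f He Hf. pose proof H as (A & I1 & I2 & U).
  unfold idem in *.
  assert (idr : forall g X, m g g = g -> m (m X g) g = m X g).
  { intros g X Hg. rewrite <- A, Hg. reflexivity. }
  set (a := i (m e f)).
  set (x := m f (m a e)).
  assert (Hx : x = a).
  { apply U.
    - unfold x. transitivity (m (m (m (m e (m f f)) a) (m e e)) f).
      + rewrite !A; reflexivity.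
      + rewrite He, Hf. rewrite <- A. unfold a. apply I1.
    - unfold x. transitivity (m f (m (m (m a (m e f)) a) e)).
      + rewrite !A. rewrite (idr e), (idr f); auto; try (rewrite ?A; reflexivity).
      + 
        unfold a. rewrite I2. reflexivity. }
  assert (Hxx : m x x = x).
  { unfold x. transitivity (m f (m (m (m a (m e f)) a) e)).
    + rewrite !A; reflexivity.
    + unfold a. rewrite I2. reflexivity. }
  assert (Hia : i a = a). { rewrite <- Hx. apply (inv_idem m i H). exact Hxx. }
  unfold a in Hia. rewrite (ii m i H) in Hia. assert (E : m e f = x) by (rewrite Hx; exact Hia). rewrite E. exact Hxx.
Qed.

Lemma comm {S} (m : S -> S -> S) i : isg m i -> forall e f, idem m e -> idem m f ->
  m e f = m f e.
Proof.
  intros H e f He Hf. pose proof H as (A & I1 & I2 & U).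
  pose proof (idem_mul m i H e f He Hf) as Hef.
  pose proof (idem_mul m i H f e Hf He) as Hfe.
  unfold idem in *.
  assert (idr : forall g X, m g g = g -> m (m X g) g = m X g).
  { intros g X Hg. rewrite <- A, Hg. reflexivity. }
  rewrite <- (inv_idem m i H (m e f) Hef).
  symmetry. apply U.
  - transitivity (m (m e f) (m e f)); [|exact Hef].
    rewrite !A. rewrite (idr f), (idr e); auto.
  - transitivity (m (m f e) (m f e)); [|exact Hfe].
    rewrite !A. rewrite (idr e), (idr f); auto.
Qed.

Lemma idr {S} (m : S -> S -> S) i : isg m i -> forall g X, idem m g -> m (m X g) g = m X g.
Proof. intros (A & _) g X Hg. unfold idem in Hg. rewrite <- A, Hg. reflexivity. Qed.

Lemma idem_sis {S} (m : S -> S -> S) i : isg m i -> forall s, idem m (m (i s) s).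
Proof. intros (A & I1 & I2 & U) s. unfold idem. rewrite A, I2. reflexivity. Qed.

Lemma idem_ssi {S} (m : S -> S -> S) i : isg m i -> forall s, idem m (m s (i s)).
Proof. intros (A & I1 & I2 & U) s. unfold idem. rewrite A, I1. reflexivity. Qed.

Lemma I1x {S} (m : S -> S -> S) i : isg m i -> forall X s, m (m (m X s) (i s)) s = m X s.
Proof. intros (A & I1 & I2 & U) X s. rewrite <- !A. rewrite (A s), I1. reflexivity. Qed.

Lemma I2x {S} (m : S -> S -> S) i : isg m i -> forall X s, m (m (m X (i s)) s) (i s) = m X (i s).
Proof. intros (A & I1 & I2 & U) X s. rewrite <- !A. rewrite (A (i s)), I2. reflexivity. Qed.

Lemma inv_mul {S} (m : S -> S -> S) i : isg m i -> forall s t, i (m s t) = m (i t) (i s).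
Proof.
  intros H s t. pose proof H as (A & I1 & I2 & U).
  symmetry; apply U.
  - transitivity (m (m s (m (m t (i t)) (m (i s) s))) t).
    + rewrite !A; reflexivity.
    + rewrite (comm m i H _ _ (idem_ssi m i H t) (idem_sis m i H s)).
      rewrite !A. rewrite I1. rewrite (I1x m i H). reflexivity.
  - transitivity (m (m (i t) (m (m (i s) s) (m t (i t)))) (i s)).
    + rewrite !A; reflexivity.
    + rewrite (comm m i H _ _ (idem_sis m i H s) (idem_ssi m i H t)).
      rewrite !A. rewrite I2. rewrite (I2x m i H). reflexivity.
Qed.

Lemma le_char {S} (m : S -> S -> S) i : isg m i -> forall s t,
  nat_le m s t -> s = m t (m (i s) s).
Proof.
  intros H s t [e [He ->]]. pose proof H as (A & I1 & I2 & U).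
  rewrite (inv_mul m i H), (inv_idem m i H e He).
  transitivity (m t (m (m e (m (i t) t)) e)); [|rewrite !A; reflexivity].
  rewrite (comm m i H _ _ He (idem_sis m i H t)).
  rewrite !A. rewrite I1. rewrite (idr m i H); auto.
Qed.

Lemma le_idem_char {S} (m : S -> S -> S) i : isg m i -> forall e f,
  idem m f -> nat_le m e f -> e = m f e.
Proof.
  intros H e f Hf [g [Hg ->]]. pose proof H as (A & I1 & I2 & U).
  unfold idem in Hf. rewrite A, Hf. reflexivity.
Qed.

Lemma le_trans {S} (m : S -> S -> S) i : isg m i -> forall s t u,
  nat_le m s t -> nat_le m t u -> nat_le m s u.
Proof.
  intros H s t u [e [He ->]] [f [Hf ->]]. pose proof H as (A & I1 & I2 & U).
  exists (m f e). split. apply (idem_mul m i H); auto. rewrite A; reflexivity.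
Qed.

Lemma le_refl {S} (m : S -> S -> S) i : isg m i -> forall s, nat_le m s s.
Proof.
  intros H s. pose proof H as (A & I1 & I2 & U). exists (m (i s) s).
  split. apply idem_sis; auto. rewrite A, I1; reflexivity.
Qed.

Lemma le_below_idem {S} (m : S -> S -> S) i : isg m i -> forall k u,
  idem m u -> nat_le m k u -> idem m k.
Proof.
  intros H k u Hu [e [He ->]]. apply (idem_mul m i H); auto.
Qed.

Lemma le_mono {S} (m : S -> S -> S) i : isg m i -> forall s t,
  nat_le m s t -> nat_le m (m (i s) s) (m (i t) t).
Proof.
  intros H s t [e [He ->]]. pose proof H as (A & I1 & I2 & U).
  exists e. split; auto.
  rewrite (inv_mul m i H), (inv_idem m i H e He).
  transitivity (m (m e (m (i t) t)) e); [rewrite !A; reflexivity|].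
  rewrite (comm m i H _ _ He (idem_sis m i H t)).
  rewrite <- A. unfold idem in He. rewrite He. reflexivity.
Qed.

Lemma key {S} (m : S -> S -> S) i : isg m i -> forall (D : S -> Prop) u v f,
  (forall d, D d -> nat_le m d u) -> (forall d, D d -> nat_le m d v) ->
  idem m f -> (forall d, D d -> nat_le m (m (i d) d) f) ->
  (forall z, (forall d, D d -> nat_le m (m (i d) d) z) -> nat_le m f z) ->
  f = m (i u) (m v f).
Proof.
  intros H D u v f Hu Hv Hf HfE Hleast. pose proof H as (A & I1 & I2 & U).
  assert (Hz : nat_le m f (m (i u) (m v f))).
  { apply Hleast. intros d Hd. exists (m (i d) d). split; [apply idem_sis; auto|].
    pose proof (le_idem_char m i H _ _ Hf (HfE d Hd)) as E1.
    pose proof (le_char m i H _ _ (Hv d Hd)) as E2.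
    pose proof (le_char m i H _ _ (Hu d Hd)) as E3.
    pose proof (le_idem_char m i H _ _ (idem_sis m i H u) (le_mono m i H _ _ (Hu d Hd))) as E4.
    remember (m (i d) d) as e eqn:Ee.
    rewrite <- !A. rewrite <- E1, <- E2. rewrite E3. rewrite A. exact E4. }
  pose proof (le_char m i H _ _ Hz) as E.
  rewrite (inv_idem m i H f Hf) in E. unfold idem in Hf. rewrite Hf in E.
  rewrite E at 1. rewrite <- A. rewrite <- A. rewrite Hf. reflexivity.
Qed.

Theorem proposition3p7 (S : Type) (mul : S -> S -> S)
  (HS : is_inverse_semigroup mul) (Hmirror : mirror mul) :
  cond_directed_complete allS (nat_le mul) <->
  cond_directed_complete (idem mul) (nat_le mul).
Proof.
  destruct (get_inv mul HS) as [i H]. pose proof H as (A & I1 & I2 & U).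
  split.
  - intros Hc D HD Hdir [u [Hu Hub]].
    destruct (Hc D (fun _ _ => I) Hdir (ex_intro _ u (conj I Hub))) as [k [[_ Hk] Hl]].
    assert (Hku : nat_le mul k u) by (apply Hl; split; [exact I|exact Hub]).
    exists k. split; [split; [exact (le_below_idem mul i H k u Hu Hku)|exact Hk]|].
    intros v [Hv Hvub]. apply Hl. split; [exact I|exact Hvub].
  - intros Hc D HD Hdir [u [_ Hub]].
    set (E := fun x => exists d, D d /\ x = mul (i d) d).
    assert (HEi : forall x, E x -> idem mul x).
    { intros x [d [_ ->]]. apply idem_sis; auto. }
    assert (HEdir : directed (nat_le mul) E).
    { destruct Hdir as [[d0 Hd0] Hdd]. split.
      - exists (mul (i d0) d0). exists d0; auto.
      - intros x y [d1 [H1 ->]] [d2 [H2 ->]].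
        destruct (Hdd d1 d2 H1 H2) as [z [Hz [Hz1 Hz2]]].
        exists (mul (i z) z). split; [exists z; auto|].
        split; apply le_mono; auto. }
    assert (HEub : exists w, is_ub (idem mul) (nat_le mul) E w).
    { exists (mul (i u) u). split; [apply idem_sis; auto|].
      intros x [d [Hd ->]]. apply le_mono; auto. }
    destruct (Hc E HEi HEdir HEub) as [f [[Hf HfE] Hfl]].
    destruct (Hmirror E HEi HEdir (ex_intro _ f (conj (conj Hf HfE) Hfl)))
      as [g [[_ HgE] Hgl]].
    assert (Hgf : nat_le mul g f) by (apply Hgl; split; [exact I|exact HfE]).
    assert (Hfg : nat_le mul f g).
    { apply Hfl. split; [exact (le_below_idem mul i H g f Hf Hgf)|exact HgE]. }
    assert (Hleast : forall z, (forall d, D d -> nat_le mul (mul (i d) d) z) ->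
                      nat_le mul f z).
    { intros z Hz. apply (le_trans mul i H f g z Hfg). apply Hgl. split; [exact I|].
      intros x [d [Hd ->]]. auto. }
    assert (HfE' : forall d, D d -> nat_le mul (mul (i d) d) f).
    { intros d Hd. apply HfE. exists d; auto. }
    exists (mul u f). split.
    + split; [exact I|]. intros d Hd. exists (mul (i d) d).
      split; [apply idem_sis; auto|].
      rewrite <- A. rewrite <- (le_idem_char mul i H _ _ Hf (HfE' d Hd)).
      apply (le_char mul i H). auto.
    + intros v [_ Hv]. exists f. split; [exact Hf|].
      pose proof (key mul i H D u v f Hub Hv Hf HfE' Hleast) as K1.
      pose proof (key mul i H D v u f Hv Hub Hf HfE' Hleast) as K2.
      transitivity (mul (mul u (i u)) (mul (mul v (i v)) (mul u f))).
      * rewrite K1 at 1. rewrite K2 at 1. rewrite !A. reflexivity.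
      * rewrite (A (mul u (i u))). rewrite (comm mul i H (mul u (i u)) (mul v (i v))) by (apply idem_ssi; auto).
        rewrite !A. rewrite (I1x mul i H). rewrite <- !A. rewrite <- K2. reflexivity.
Qed.
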